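(* Let $(\mathcal{V},g)$ be a real scalar product space of dimension $n>2m$, let $J_1,\dots,J_m$ be skew-adjoint endomorphisms of $\mathcal{V}$ with $J_iJ_j+J_jJ_i=2\delta_{ij}\,\mathrm{id}$ for $1\le i,j\le m$, and let $\mu_0\in\mathbb{R}$ and $\mu_1,\dots,\mu_m\in\mathbb{R}\setminus\{0\}$. Suppose there exist $\theta_0,\dots,\theta_m\in\mathbb{R}$, not all zero, and a nonzero $X\in\mathcal{V}$ such that $\theta_0X+\theta_1J_1X+\dots+\theta_mJ_mX=0$ and $$\theta_0^2=\sum_{i=1}^m\theta_i^2=-\mu_0\sum_{i=1}^m\frac{\theta_i^2}{3\mu_i}.$$ Then the (anti-Clifford) algebraic curvature tensor $R=\mu_0R^0+\sum_{i=1}^m\mu_iR^{J_i}$ is not totally Jacobi-dual.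
   Context: A scalar product space is a finite-dimensional real vector space with a nondegenerate symmetric bilinear form $g$; $\varepsilon_X=g(X,X)$. $R^0(X,Y,Z,W)=g(Y,Z)g(X,W)-g(X,Z)g(Y,W)$; for skew-adjoint $J$, $R^J(X,Y,Z,W)=g(JX,Z)g(JY,W)-g(JY,Z)g(JX,W)+2g(JX,Y)g(JZ,W)$. The Jacobi operator is $\mathcal{J}_X(Y)=\sum_{i}\varepsilon_{E_i}R(Y,X,X,E_i)E_i$ for an orthonormal basis $(E_i)$. An eigenvector of $\mathcal{J}_X$ is a nonzero $Y$ with $\mathcal{J}_X(Y)=\lambda Y$, $\lambda\in\mathbb{R}$. $R$ is totally Jacobi-dual if for all $X,Y\in\mathcal{V}$ with $X\neq0$: whenever $Y$ is an eigenvector of $\mathcal{J}_X$, then $X$ is an eigenvector of $\mathcal{J}_Y$. *)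

(* Defs.v *)
(* Scalar product space modelled as row vectors 'rV[R]_n
   with a symmetric invertible Gram matrix G: g(x,y) = x G y^T. *)
From HB Require Import structures.
From mathcomp Require Import all_boot all_order all_algebra.
From mathcomp Require Import reals.
Set Implicit Arguments. Unset Strict Implicit. Unset Printing Implicit Defensive.
Import Order.TTheory GRing.Theory Num.Theory.
Local Open Scope ring_scope.

Section Defs.
Variables (R : realType) (n : nat) (G : 'M[R]_n).

Definition gform (x y : 'rV[R]_n) : R := (x *m G *m y^T) 0 0.

Definition scalar_product_space : Prop := G^T = G /\ G \in unitmx.

Definition skew_adjoint (J : 'M[R]_n) : Prop :=
  forall x y, gform (x *m J) y = - gform x (y *m J).

Definition R0 (X Y Z W : 'rV[R]_n) : R :=
  gform Y Z * gform X W - gform X Z * gform Y W.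

Definition RJ (J : 'M[R]_n) (X Y Z W : 'rV[R]_n) : R :=
  gform (X *m J) Z * gform (Y *m J) W - gform (Y *m J) Z * gform (X *m J) W
  + 2 * gform (X *m J) Y * gform (Z *m J) W.

Definition antiClifford_tensor (m : nat) (J : 'I_m -> 'M[R]_n)
  (mu0 : R) (mu : 'I_m -> R) (X Y Z W : 'rV[R]_n) : R :=
  mu0 * R0 X Y Z W + \sum_(i < m) mu i * RJ (J i) X Y Z W.

(* Jacobi operator J_X(Y) = sum_i eps_i R(Y,X,X,E_i) E_i, written in
   coordinates w.r.t. the standard basis e_j: the unique vector v with
   g(v, e_j) = R(Y,X,X,e_j) for all j, i.e. v = r G^{-1}. *)
Definition jacobi_op (Rt : 'rV[R]_n -> 'rV[R]_n -> 'rV[R]_n -> 'rV[R]_n -> R)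
  (X Y : 'rV[R]_n) : 'rV[R]_n :=
  (\row_j Rt Y X X (delta_mx 0 j)) *m invmx G.

Definition is_eigenvector (f : 'rV[R]_n -> 'rV[R]_n) (Y : 'rV[R]_n) : Prop :=
  Y != 0 /\ exists lam : R, f Y = lam *: Y.

Definition totally_jacobi_dual
  (Rt : 'rV[R]_n -> 'rV[R]_n -> 'rV[R]_n -> 'rV[R]_n -> R) : Prop :=
  forall X Y : 'rV[R]_n, X != 0 ->
    is_eigenvector (jacobi_op Rt X) Y -> is_eigenvector (jacobi_op Rt Y) X.

End Defs.

(* Main.v *)
Require Import Defs.
From HB Require Import structures.
From mathcomp Require Import all_boot all_order all_algebra.
From mathcomp Require Import reals.
From mathcomp Require Import ring lra zify.
Set Implicit Arguments. Unset Strict Implicit. Unset Printing Implicit Defensive.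
Import Order.TTheory GRing.Theory Num.Theory.
Local Open Scope ring_scope.

Lemma gformDl (R : realType) n (G : 'M[R]_n) x y z :
  gform G (x + y) z = gform G x z + gform G y z.
Proof. by rewrite /gform !mulmxDl mxE. Qed.
Lemma gformZl (R : realType) n (G : 'M[R]_n) a x z :
  gform G (a *: x) z = a * gform G x z.
Proof. by rewrite /gform -!scalemxAl mxE. Qed.
Lemma gformNl (R : realType) n (G : 'M[R]_n) x z :
  gform G (- x) z = - gform G x z.
Proof. by rewrite -scaleN1r gformZl mulN1r. Qed.
Lemma gformBl (R : realType) n (G : 'M[R]_n) x y z :
  gform G (x - y) z = gform G x z - gform G y z.
Proof. by rewrite gformDl gformNl. Qed.
Lemma gform0l (R : realType) n (G : 'M[R]_n) z : gform G 0 z = 0.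
Proof. by rewrite /gform !mul0mx mxE. Qed.
Lemma gform_suml (R : realType) n (G : 'M[R]_n) m (f : 'I_m -> 'rV[R]_n) z :
  gform G (\sum_(i < m) f i) z = \sum_(i < m) gform G (f i) z.
Proof.
by apply: (big_morph (fun x => gform G x z) (fun x y => gformDl G x y z) (gform0l G z)).
Qed.
Lemma gformC (R : realType) n (G : 'M[R]_n) x y : G^T = G ->
  gform G x y = gform G y x.
Proof.
move=> hG; rewrite /gform; transitivity ((x *m G *m y^T)^T 0 0); first by rewrite [RHS]mxE.
by rewrite !trmx_mul trmxK hG mulmxA.
Qed.
Lemma gformDr (R : realType) n (G : 'M[R]_n) x y z : G^T = G ->
  gform G z (x + y) = gform G z x + gform G z y.
Proof. by move=> hG; rewrite !(gformC z) // gformDl. Qed.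
Lemma gformZr (R : realType) n (G : 'M[R]_n) a x z : G^T = G ->
  gform G z (a *: x) = a * gform G z x.
Proof. by move=> hG; rewrite !(gformC z) // gformZl. Qed.
Lemma gform_sumr (R : realType) n (G : 'M[R]_n) m (f : 'I_m -> 'rV[R]_n) z : G^T = G ->
  gform G z (\sum_(i < m) f i) = \sum_(i < m) gform G z (f i).
Proof.
move=> hG; rewrite gformC // gform_suml; apply: eq_bigr => i _; exact: gformC.
Qed.

Lemma jacobi_opE (R : realType) n (G : 'M[R]_n)
  (Rt : 'rV[R]_n -> 'rV[R]_n -> 'rV[R]_n -> 'rV[R]_n -> R) a b V :
  G \in unitmx -> (forall W, Rt b a a W = gform G V W) ->
  jacobi_op G Rt a b = V.
Proof.
move=> hU hV; rewrite /jacobi_op.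
have -> : \row_j Rt b a a (delta_mx 0 j) = V *m G.
  apply/rowP => j; rewrite mxE hV /gform trmx_delta -colE mxE //.
by rewrite mulmxK.
Qed.

Lemma mx_form0 (R : realType) n (M : 'M[R]_n) :
  (forall x y : 'rV[R]_n, (x *m M *m y^T) 0 0 = 0) -> M = 0.
Proof.
move=> h; apply/matrixP => i j; have := h (delta_mx 0 i) (delta_mx 0 j).
by rewrite -rowE trmx_delta -colE !mxE.
Qed.
Lemma cliff_sq (R : realType) n m (J : 'I_m -> 'M[R]_n)
  (hJ : forall i j, J i *m J j + J j *m J i = (2 * (i == j)%:R)%:M) (c : 'I_m -> R) :
  (\sum_(i < m) c i *: J i) *m (\sum_(i < m) c i *: J i) = (\sum_(i < m) c i ^+ 2)%:M.
Proof.
set S := \sum_(i < m) c i *: J i.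
have E : S *m S = \sum_(i < m) \sum_(j < m) (c i * c j) *: (J i *m J j).
  rewrite mulmx_suml; apply: eq_bigr => i _; rewrite mulmx_sumr; apply: eq_bigr => j _.
  by rewrite -scalemxAl -scalemxAr scalerA.
have E2 : S *m S + S *m S = \sum_(i < m) \sum_(j < m) (c i * c j) *: (J i *m J j + J j *m J i).
  rewrite [in RHS](eq_bigr (fun i => \sum_(j < m) (c i * c j) *: (J i *m J j) + \sum_(j < m) (c i * c j) *: (J j *m J i))); last first.
    by move=> i _; rewrite -big_split; apply: eq_bigr => j _; rewrite scalerDr.
  rewrite big_split /= -E; congr (_ + _); rewrite E exchange_big /=.
  by apply: eq_bigr => i _; apply: eq_bigr => j _; rewrite mulrC.
have E3 : \sum_(i < m) \sum_(j < m) (c i * c j) *: (J i *m J j + J j *m J i)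
   = (\sum_(i < m) c i ^+ 2)%:M + (\sum_(i < m) c i ^+ 2)%:M.
  rewrite -raddfD /= -big_split /= raddf_sum; apply: eq_bigr => i _.
  rewrite (bigD1 i) //= big1 ?addr0; last first.
    by move=> j /negPf ji; rewrite hJ eq_sym ji /= mulr0 scale_scalar_mx mulr0 raddf0.
  by rewrite hJ eqxx scale_scalar_mx; congr (_%:M); rewrite /= expr2; ring.
have : (2 : R) *: (S *m S) = 2 *: (\sum_(i < m) c i ^+ 2)%:M.
  by rewrite !scaler_nat !mulr2n E2 E3.
by move/scalerI; apply; rewrite pnatr_eq0.
Qed.

Lemma skew_mx (R : realType) n (G J : 'M[R]_n) :
  skew_adjoint G J -> J *m G = - (G *m J^T).
Proof.
move=> hs; apply/eqP; rewrite -addr_eq0; apply/eqP; apply: mx_form0 => x y.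
have h := hs x y; rewrite /gform trmx_mul in h.
rewrite mulmxDr mulmxDl [LHS]mxE !mulmxA h !mulmxA; exact: addNr.
Qed.

Lemma gJxx (R : realType) n (G J : 'M[R]_n) x :
  G^T = G -> skew_adjoint G J -> gform G (x *m J) x = 0.
Proof.
move=> hG hs; have := hs x x; rewrite (gformC (x *m J)) // => h.
lra.
Qed.

Definition Vf (R : realType) n m (G : 'M[R]_n) (J : 'I_m -> 'M[R]_n) (mu0 : R)
  (mu : 'I_m -> R) (a b : 'rV[R]_n) : 'rV[R]_n :=
  mu0 *: (gform G b b *: a - gform G a b *: b) +
  \sum_(i < m) mu i *: (gform G (a *m J i) b *: (b *m J i)
     - gform G (b *m J i) b *: (a *m J i) + (2 * gform G (a *m J i) b) *: (b *m J i)).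

Lemma Rt_form (R : realType) n m (G : 'M[R]_n) (J : 'I_m -> 'M[R]_n) mu0 mu a b W :
  antiClifford_tensor G J mu0 mu a b b W = gform G (Vf G J mu0 mu a b) W.
Proof.
rewrite /antiClifford_tensor /Vf gformDl gformZl gform_suml; congr (_ + _).
  by rewrite /R0 gformBl !gformZl.
apply: eq_bigr => i _; rewrite gformZl /RJ !gformDl gformNl !gformZl.
ring.
Qed.

Theorem mainTheorem7 (R : realType) (n m : nat) (G : 'M[R]_n)
  (J : 'I_m -> 'M[R]_n) (mu0 : R) (mu : 'I_m -> R) :
  scalar_product_space G ->
  (n > 2 * m)%N ->
  (forall i, skew_adjoint G (J i)) ->
  (forall i j, J i *m J j + J j *m J i = (2 * (i == j)%:R)%:M) ->
  (forall i, mu i != 0) ->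
  forall (theta0 : R) (theta : 'I_m -> R) (X : 'rV[R]_n),
    (theta0 != 0 \/ exists i, theta i != 0) ->
    X != 0 ->
    theta0 *: X + \sum_(i < m) theta i *: (X *m J i) = 0 ->
    theta0 ^+ 2 = \sum_(i < m) theta i ^+ 2 ->
    \sum_(i < m) theta i ^+ 2 = - mu0 * \sum_(i < m) theta i ^+ 2 / (3 * mu i) ->
    ~ totally_jacobi_dual G (antiClifford_tensor G J mu0 mu).
Proof.
move=> [hGs hGu] hn hskew hJ hmu th0 th X hth hX hXrel hth0 hmu0 TJD.
have s0 : \sum_(i < m) th i ^+ 2 = 0 -> forall i, th i = 0.
  move=> h i; apply/eqP; rewrite -sqrf_eq0; apply/eqP.
  by apply: (psumr_eq0P _ h) => // j _; rewrite sqr_ge0.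
have th0nz : th0 != 0.
  apply/negP => /eqP h0; move: hth0; rewrite h0 expr0n /= => /esym/s0 hz.
  by case: hth => [|[i]]; rewrite ?h0 ?hz ?eqxx.
set A := \sum_(i < m) th i *: J i.
have hAA : A *m A = (th0 ^+ 2)%:M by rewrite hth0; apply: cliff_sq.
set P := th0%:M + A.
have UP : forall U : 'rV[R]_n, U *m P = th0 *: U + \sum_(i < m) th i *: (U *m J i).
  move=> U; rewrite /P mulmxDr mul_mx_scalar mulmx_sumr; congr (_ + _).
  by apply: eq_bigr => i _; rewrite scalemxAr.
have hXP : X *m P = 0 by rewrite UP.
have hPP : P *m P = (2 * th0) *: P.
  rewrite {1}/P mulmxDl mul_scalar_mx /P mulmxDr hAA mul_mx_scalar.
  rewrite !scalerDr !scale_scalar_mx mulr2n mulrDl !scalerDl -expr2.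
  by rewrite !mul1r mulrDl -expr2 raddfD /= [th0 *: A + _]addrC addrACA.
have hm : (0 < m)%N.
  case: (posnP m) => // m0; exfalso; move/negP: th0nz; apply.
  by rewrite -sqrf_eq0 hth0 big1 // => -[i hi]; exfalso; move: hi; rewrite m0.
set Mp := \matrix_(i < m) (X *m J i).
have rowMp : forall i, row i Mp = X *m J i by move=> i; rewrite rowK.
have Mpinj : forall r : 'rV[R]_m, r *m Mp = 0 -> r = 0.
  move=> r hr.
  have e1 : r *m Mp = X *m \sum_(i < m) r 0 i *: J i.
    rewrite mulmx_sum_row mulmx_sumr; apply: eq_bigr => i _.
    by rewrite rowMp scalemxAr.
  have := cliff_sq hJ (fun i => r 0 i).
  move=> /(congr1 (mulmx X)); rewrite mulmxA -e1 hr mul0mx mul_mx_scalar.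
  move/esym/eqP; rewrite scaler_eq0 (negPf hX) orbF => /eqP hs.
  apply/rowP => i; rewrite mxE; apply/eqP; rewrite -sqrf_eq0; apply/eqP.
  by apply: (psumr_eq0P _ hs) => // j _; exact: sqr_ge0.
have hsumXJ : \sum_(i < m) th i *: (X *m J i) = - (th0 *: X).
  by apply/eqP; rewrite -addr_eq0 addrC hXrel.
set thr := \row_(i < m) th i.
have thrnz : thr != 0.
  apply/eqP => h0; move/negP: th0nz; apply.
  rewrite -sqrf_eq0 hth0 big1 // => i _.
  by have := congr1 (fun v : 'rV[R]_m => v 0 i) h0; rewrite !mxE => ->; rewrite expr0n.
have rkMpP : (\rank (Mp *m P) < m)%N.
  have hk : (thr <= kermx (Mp *m P))%MS.
    rewrite sub_kermx mulmxA (mulmx_sum_row thr).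
    rewrite (eq_bigr (fun i => th i *: (X *m J i))); last by move=> i _; rewrite rowMp mxE.
    by rewrite hsumXJ mulNmx -scalemxAl hXP scaler0 oppr0.
  have := mxrankS hk; rewrite rank_rV thrnz mxrank_ker.
  by move=> h; rewrite -subn_gt0.
have hAG : A *m G = - (G *m A^T).
  rewrite /A mulmx_suml linear_sum mulmx_sumr -sumrN; apply: eq_bigr => i _.
  by rewrite -scalemxAl skew_mx // linearZ /= -scalemxAr scalerN.
set K := kermx P.
have hKA : K *m A = - (th0 *: K).
  apply/eqP; rewrite -addr_eq0 addrC; apply/eqP.
  by rewrite -mul_mx_scalar -mulmxDr mulmx_ker.
have hKGK : K *m G *m K^T = 0.
  have e1 : K *m A *m G *m K^T = - th0 *: (K *m G *m K^T).
    by rewrite hKA scaleNr !mulNmx -!scalemxAl.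
  have e2 : K *m A *m G *m K^T = th0 *: (K *m G *m K^T).
    rewrite -(mulmxA K) hAG mulmxN mulNmx mulmxA -(mulmxA (K *m G)) -trmx_mul hKA.
    by rewrite raddfN /= linearZ /= mulmxN -scalemxAr opprK.
  have : (th0 + th0) *: (K *m G *m K^T) = 0.
    by rewrite scalerDl -{1}e2 e1 scaleNr addNr.
  move/eqP; rewrite scaler_eq0 => /orP[|/eqP //].
  by rewrite -mulr2n mulrn_eq0 /= (negPf th0nz).
have rkK : (2 * \rank K <= n)%N.
  have := mxrank_mul_min (K *m G) K^T.
  rewrite hKGK mxrank0 mxrankMfree ?row_free_unit // mxrank_tr.
  move=> h; have := rank_leq_col K; lia.
have rkP : \rank P = (n - \rank K)%N.
  by rewrite /K mxrank_ker; have := rank_leq_row P; lia.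
set Q := kermx (G *m X^T).
have rkQ : \rank Q = (n - 1)%N.
  rewrite /Q mxrank_ker; congr (_ - _)%N; apply/eqP; rewrite eqn_leq rank_leq_col /=.
  rewrite lt0n mxrank_eq0; apply/eqP => h.
  have : invmx G *m (G *m X^T) = 0 by rewrite h mulmx0.
  by rewrite mulKmx // => /eqP; rewrite trmx_eq0 (negPf hX).
have nsub : ~~ (Q *m P <= Mp)%MS.
  apply/negP => hs.
  have h1 : (Q *m P <= Mp *m P)%MS.
    have := submxMr P hs; rewrite -mulmxA hPP -scalemxAr => h2.
    have h3 : (2 * th0 != 0) by rewrite mulf_neq0 // pnatr_eq0.
    by rewrite -(scalerK h3 (Q *m P)); apply: scalemx_sub.
  have := mxrankS h1; have := mxrank_mul_min Q P; rewrite rkQ rkP.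
  move: rkK rkMpP hn; lia.
have [i hi] : exists i, ~~ (row i (Q *m P) <= Mp)%MS by apply/row_subPn.
set U := row i Q.
set v := U *m P.
have hUX : gform G X U = 0.
  rewrite gformC // /gform -mulmxA.
  by rewrite /U -row_mul mulmx_ker row0 mxE.
have vnot : ~~ (v <= Mp)%MS by rewrite /v /U -row_mul.
set N := col_mx Mp v.
have Nfree : row_free N.
  apply: inj_row_free => r hr.
  move: hr; rewrite -[r]hsubmxK mul_row_col.
  set r1 := lsubmx r; set r2 := rsubmx r.
  rewrite [r2]mx11_scalar mul_scalar_mx.
  case: (eqVneq (r2 0 0) 0) => [h0|hnz].
    rewrite h0 scale0r addr0 => /Mpinj ->.
    by rewrite raddf0 row_mx0.
  move=> h; exfalso; move/negP: vnot; apply.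
  have -> : v = - (r2 0 0)^-1 *: (r1 *m Mp).
    apply: (scalerI hnz); rewrite scalerA mulrN mulfV // scaleN1r.
    by apply/eqP; rewrite -addr_eq0 addrC h.
  by apply: scalemx_sub; apply: submxMl.
have [B hB] := row_freeP Nfree.
set bv := \row_(i < m) (th i / (3 * mu i)).
set c := row_mx bv (1%:M : 'M[R]_1).
set w := c *m B^T.
have hw : w *m N^T = c by rewrite /w -mulmxA -trmx_mul hB trmx1 mulmx1.
move: hw; rewrite /N tr_col_mx mul_mx_row /c => /eq_row_mx [hw1 hw2].
set Y := w *m invmx G.
have gY : forall z, gform G Y z = (w *m z^T) 0 0.
  by move=> z; rewrite /gform /Y mulmxKV.
have gYXJ : forall i, gform G Y (X *m J i) = th i / (3 * mu i).
  by move=> k; rewrite gY -rowMp tr_row colE mulmxA -colE mxE hw1 /bv mxE.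
have gYv : gform G Y v = 1 by rewrite gY hw2 mxE eqxx.
have hX0 : th0 *: X = - \sum_(i < m) th i *: (X *m J i) by rewrite hsumXJ opprK.
have gXX : gform G X X = 0.
  have : th0 * gform G X X = 0.
    rewrite -gformZl hX0 gformNl gform_suml big1 ?oppr0 // => k _.
    by rewrite gformZl gJxx // mulr0.
  by move/eqP; rewrite mulf_eq0 (negPf th0nz) /= => /eqP.
have hYX : mu0 * gform G Y X = th0.
  have e : th0 * gform G Y X = - \sum_(i < m) th i ^+ 2 / (3 * mu i).
    rewrite -gformZr // hX0 -scaleN1r gformZr // gform_sumr // mulN1r; congr (- _).
    by apply: eq_bigr => k _; rewrite gformZr // gYXJ expr2 mulrA.
  apply: (mulfI th0nz); rewrite mulrCA e mulrN -mulNr -hmu0 -hth0 expr2 //.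
have hVYX : Vf G J mu0 mu Y X = 0.
  rewrite /Vf gXX scale0r sub0r scalerN scalerA hYX.
  rewrite (eq_bigr (fun k => (- th k) *: (X *m J k))); last first.
    move=> k _; rewrite hskew gYXJ gJxx // scale0r subr0 -scalerDl scalerA.
    by congr (_ *: _); field; rewrite hmu.
  by rewrite (eq_bigr (fun k => - (th k *: (X *m J k)))) ?sumrN ?hsumXJ ?opprK ?addNr // => k _; rewrite scaleNr.
have Ynz : Y != 0.
  by apply/eqP => h; move: gYv; rewrite h gform0l => /eqP; rewrite eq_sym oner_eq0.
have eig : is_eigenvector (jacobi_op G (antiClifford_tensor G J mu0 mu) X) Y.
  split => //; exists 0; rewrite scale0r.
  by rewrite (jacobi_opE hGu (fun W => Rt_form G J mu0 mu Y X W)) hVYX.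
have [_ [lam hlam]] := TJD X Y hX eig.
rewrite (jacobi_opE hGu (fun W => Rt_form G J mu0 mu X Y W)) in hlam.
have h0 := congr1 (fun z => gform G z U) hlam; rewrite /= gformZl hUX mulr0 in h0.
have hv := gYv; rewrite /v UP gformDr // gformZr // gform_sumr // in hv.
have eV : gform G (Vf G J mu0 mu X Y) U =
   - (mu0 * gform G Y X) * gform G Y U - \sum_(k < m) th k * gform G Y (U *m J k).
  rewrite /Vf gformDl gformZl gformBl !gformZl hUX mulr0 sub0r (gformC X Y) //.
  rewrite gform_suml -sumrN; congr (_ + _); first by ring.
  apply: eq_bigr => k _; rewrite gformZl !gformDl gformNl !gformZl.
  rewrite (gformC (X *m J k) Y) // gYXJ gJxx // hskew; field; exact: hmu.
rewrite (eq_bigr (fun k => th k * gform G Y (U *m J k))) in hv; last first.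
  by move=> k _; rewrite gformZr.
move: h0 hv; rewrite eV hYX; lra.
Qed.
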